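(* Let $\kappa=(a,b,c,d)$ with $a,b,c,d\notin\{\pm2\}$, let $\rho\in\mathcal H_\kappa$, and let $(x,y,z)=(\operatorname{tr}\rho(AB),\operatorname{tr}\rho(BC),\operatorname{tr}\rho(CA))$. Then $\rho$ is a $\mathrm{Spin}(2)$-representation if and only if $x$ is an endpoint of both $I_{a,b}$ and $I_{c,d}$, $y$ is an endpoint of both $I_{b,c}$ and $I_{a,d}$, and $z$ is an endpoint of both $I_{a,c}$ and $I_{b,d}$.
   Context: $M$ is a four-holed sphere with $\pi_1(M)=\langle A,B,C,D : ABCD=I\rangle$, $A,B,C,D$ the boundary classes. For $\kappa=(a,b,c,d)\in[-2,2]^4$, $\mathcal H_\kappa$ is the set of homomorphisms $\rho:\pi_1(M)\to\mathrm{SU}(2)$ with $\operatorname{tr}\rho(A)=a$, $\operatorname{tr}\rho(B)=b$, $\operatorname{tr}\rho(C)=c$, $\operatorname{tr}\rho(D)=d$. For $s,t\in[-2,2]$, $I_{s,t}=\Big[\frac{st-\sqrt{(s^2-4)(t^2-4)}}{2},\ \frac{st+\sqrt{(s^2-4)(t^2-4)}}{2}\Big]$. $\mathrm{Spin}(2)\subset\mathrm{SU}(2)$ is the circle subgroup $\{e^{i\theta}\}$, where $e^{i\theta}$ denotes the matrix $\begin{pmatrix}\cos\theta&\sin\theta\\-\sin\theta&\cos\theta\end{pmatrix}$. For a subgroup $G\subset\mathrm{SU}(2)$, $\rho$ is called a $G$-representation if some $\mathrm{SU}(2)$-conjugate of $\rho$ has image contained in $G$. *)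

(* Defs.v *)
From HB Require Import structures.
From mathcomp Require Import all_boot all_order all_algebra.
From mathcomp Require Import complex.
From mathcomp Require Import reals trigo.
Set Implicit Arguments. Unset Strict Implicit. Unset Printing Implicit Defensive.
Import Order.TTheory GRing.Theory Num.Theory.
Local Open Scope ring_scope.
Local Open Scope complex_scope.

Section Defs.
Variable R : realType.

Definition adjmx (U : 'M[R[i]]_2) : 'M[R[i]]_2 := (map_mx (@conjc R) U)^T.

Definition SU2 (U : 'M[R[i]]_2) : Prop :=
  U *m adjmx U = 1%:M /\ \det U = 1.

Definition eitheta (t : R) : 'M[R[i]]_2 :=
  \matrix_(i < 2, j < 2)
    (if i == j then (cos t)%:C
     else if (i == 0) then (sin t)%:C else (- sin t)%:C).

Definition Spin2 (U : 'M[R[i]]_2) : Prop := exists t : R, U = eitheta t.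

(* A homomorphism rho : pi_1(M) = <A,B,C,D | ABCD = I> -> SU(2) is the same
   as the quadruple (rho A, rho B, rho C, rho D) of SU(2) matrices with
   product the identity. *)
Definition SU2_rep (rA rB rC rD : 'M[R[i]]_2) : Prop :=
  [/\ SU2 rA, SU2 rB, SU2 rC, SU2 rD & rA *m rB *m rC *m rD = 1%:M].

Definition in_H (a b c d : R) (rA rB rC rD : 'M[R[i]]_2) : Prop :=
  SU2_rep rA rB rC rD /\
  [/\ \tr rA = a%:C, \tr rB = b%:C, \tr rC = c%:C & \tr rD = d%:C].

(* rho is a G-representation: some SU(2)-conjugate of rho has image in G.
   The image of rho is the subgroup generated by rho A, rho B, rho C, rho D,
   and conjugation by g sends rho(X) to g rho(X) g^{-1}; since Spin(2) is a
   subgroup, the image lies in it iff the four generators do. *)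
Definition Spin2_rep (rA rB rC rD : 'M[R[i]]_2) : Prop :=
  exists g : 'M[R[i]]_2, SU2 g /\
    forall X, X \in [:: rA; rB; rC; rD] -> Spin2 (g *m X *m invmx g).

Definition Ilo (s t : R) : R := (s * t - Num.sqrt ((s ^+ 2 - 4) * (t ^+ 2 - 4))) / 2.
Definition Ihi (s t : R) : R := (s * t + Num.sqrt ((s ^+ 2 - 4) * (t ^+ 2 - 4))) / 2.

Definition is_endpoint (s t : R) (x : R[i]) : Prop :=
  x = (Ilo s t)%:C \/ x = (Ihi s t)%:C.

End Defs.

(* Main.v *)
Require Import Defs.
From HB Require Import structures.
From mathcomp Require Import all_boot all_order all_algebra.
From mathcomp Require Import complex.
From mathcomp Require Import reals trigo.
From mathcomp Require Import ring lra.
Import Order.TTheory GRing.Theory Num.Theory.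
Set Implicit Arguments. Unset Strict Implicit. Unset Printing Implicit Defensive.
Local Open Scope ring_scope.
Local Open Scope complex_scope.

Lemma det2 (R : comPzRingType) (M : 'M[R]_2) : \det M = M 0 0 * M 1 1 - M 0 1 * M 1 0.
Proof.
rewrite (expand_det_row _ 0) !big_ord_recl big_ord0 addr0 /cofactor !det_mx11 !mxE /=.
rewrite !expr0 !expr1 !mul1r mulN1r mulrN.
by congr (_ * M _ _ - M _ _ * M _ _); apply/val_inj.
Qed.

Lemma ord2 (k : 'I_2) : k = 0 \/ k = 1.
Proof. by case: k => [[|[|//]] ?]; [left|right]; apply/val_inj. Qed.

Section S.
Variable R : realType.
Lemma cadd (a b c d : R) : (a +i* b) + (c +i* d) = (a+c) +i* (b+d). Proof. by []. Qed.
Lemma cmul (a b c d : R) : (a +i* b) * (c +i* d) = (a*c - b*d) +i* (a*d + b*c). Proof. by []. Qed.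
Lemma copp (a b : R) : - (a +i* b) = (-a) +i* (-b). Proof. by []. Qed.
Lemma c0 : (0 : R[i]) = 0 +i* 0. Proof. by []. Qed.
Lemma c1 : (1 : R[i]) = 1 +i* 0. Proof. by []. Qed.
Lemma cR (a : R) : a%:C = a +i* 0. Proof. by []. Qed.
Lemma cconj (a b : R) : (a +i* b)^*%C = a +i* (-b). Proof. by []. Qed.
Lemma cinj (a b c d : R) : a +i* b = c +i* d -> a = c /\ b = d. Proof. by case. Qed.

Definition Q (m0 m1 m2 m3 : R) : 'M[R[i]]_2 :=
  \matrix_(i < 2, j < 2) if i == 0 then (if j == 0 then m0 +i* m1 else m2 +i* m3)
                         else (if j == 0 then (-m2) +i* m3 else m0 +i* (-m1)).

Lemma Qmul a0 a1 a2 a3 b0 b1 b2 b3 : Q a0 a1 a2 a3 *m Q b0 b1 b2 b3 =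
  Q (a0*b0 - a1*b1 - a2*b2 - a3*b3) (a0*b1 + a1*b0 + a2*b3 - a3*b2)
    (a0*b2 - a1*b3 + a2*b0 + a3*b1) (a0*b3 + a1*b2 - a2*b1 + a3*b0).
Proof.
apply/matrixP => i j; rewrite !mxE !big_ord_recl big_ord0 !mxE /=.
case: i => [[|[|//]] ?]; case: j => [[|[|//]] ?] /=;
  rewrite !cmul !cadd; congr Complex; ring.
Qed.

Lemma Qtr m0 m1 m2 m3 : \tr (Q m0 m1 m2 m3) = (2 * m0)%:C.
Proof. rewrite /mxtrace !big_ord_recl big_ord0 !mxE /= !cadd cR; congr Complex; ring. Qed.

Lemma Qdet m0 m1 m2 m3 : \det (Q m0 m1 m2 m3) = (m0^+2 + m1^+2 + m2^+2 + m3^+2)%:C.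
Proof. rewrite det2 !mxE /= !cmul cR; congr Complex; ring. Qed.

Lemma Qadj m0 m1 m2 m3 : adjmx (Q m0 m1 m2 m3) = Q m0 (-m1) (-m2) (-m3).
Proof.
apply/matrixP => i j; rewrite !mxE /=.
case: i => [[|[|//]] ?]; case: j => [[|[|//]] ?] /=; congr Complex; ring.
Qed.

Lemma Q1 : Q 1 0 0 0 = 1%:M.
Proof.
apply/matrixP => i j; rewrite !mxE /=.
case: i => [[|[|//]] ?]; case: j => [[|[|//]] ?] /=; rewrite ?c1 ?c0; congr Complex; ring.
Qed.

Lemma Qe t : eitheta t = Q (cos t) 0 (sin t) 0.
Proof.
apply/matrixP => i j; rewrite !mxE /=.
case: i => [[|[|//]] ?]; case: j => [[|[|//]] ?] /=; rewrite ?cR; congr Complex; ring.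
Qed.
Lemma SU2_Q U : SU2 U -> exists m0 m1 m2 m3,
  U = Q m0 m1 m2 m3 /\ m0^+2 + m1^+2 + m2^+2 + m3^+2 = 1.
Proof.
move=> [H hdet].
have E00 := congr1 (fun M : 'M_2 => M 0 0) H.
have E10 := congr1 (fun M : 'M_2 => M 1 0) H.
rewrite !mxE !big_ord_recl big_ord0 !mxE /= in E00.
rewrite !mxE !big_ord_recl big_ord0 !mxE /= in E10.
rewrite det2 in hdet.
have L : lift ord0 ord0 = 1 :> 'I_2 by apply/val_inj.
rewrite !L in E00 E10.
set p := U 0 0 in E00 E10 hdet; set q := U 0 1 in E00 E10 hdet.
set r := U 1 0 in E00 E10 hdet; set s := U 1 1 in E00 E10 hdet.
have hs : s = p^*%C.
  have -> : s = s * (1 - (p * p^*%C + (q * q^*%C + 0))) + p^*%C * ((p * s - q * r) - 1)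
     + q * (r * p^*%C + (s * q^*%C + 0)) + p^*%C by ring.
  rewrite E00 E10 hdet; ring.
have hr : r = - q^*%C.
  have -> : r = r * (1 - (p * p^*%C + (q * q^*%C + 0))) - q^*%C * ((p * s - q * r) - 1)
     + p * (r * p^*%C + (s * q^*%C + 0)) - q^*%C by ring.
  rewrite E00 E10 hdet; ring.
move: E00; rewrite /p /q in hs hr *.
case E1 : (U 0 0) hs => [p0 p1] hs; case E2 : (U 0 1) hr => [q0 q1] hr E00.
exists p0, p1, q0, q1; split.
  apply/matrixP => i j; have [->|->] := ord2 i; have [->|->] := ord2 j; rewrite !mxE /=.
  - by rewrite E1.
  - by rewrite E2.
  - by rewrite -/r hr cconj copp opprK.
  - by move: hs; rewrite /s => ->.
move: E00; rewrite /= !cmul !cadd c1 => /cinj [+ _]. move=> <-; ring.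
Qed.

Lemma QZ k a b c d : Q (k*a) (k*b) (k*c) (k*d) = k%:C *: Q a b c d.
Proof.
apply/matrixP => i j; have [->|->] := ord2 i; have [->|->] := ord2 j;
  rewrite !mxE /= cR cmul; congr Complex; ring.
Qed.

Lemma Qinj a0 a1 a2 a3 b0 b1 b2 b3 : Q a0 a1 a2 a3 = Q b0 b1 b2 b3 ->
  [/\ a0 = b0, a1 = b1, a2 = b2 & a3 = b3].
Proof.
move=> E; have E1 := congr1 (fun M : 'M_2 => M 0 0) E.
have E2 := congr1 (fun M : 'M_2 => M 0 1) E.
rewrite !mxE /= in E1 E2.
by case: E1 => -> ->; case: E2 => -> ->.
Qed.

Lemma QSU2 m0 m1 m2 m3 : m0^+2 + m1^+2 + m2^+2 + m3^+2 = 1 -> SU2 (Q m0 m1 m2 m3).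
Proof.
move=> h; split; last by rewrite Qdet h.
rewrite Qadj Qmul -[1%:M]Q1; congr Q; rewrite -?h; ring.
Qed.

Lemma SU2_unit (g : 'M[R[i]]_2) : SU2 g -> g \in unitmx.
Proof. by case=> _ h; rewrite unitmxE h unitr1. Qed.

Lemma cjM (g X Y : 'M[R[i]]_2) : g \in unitmx ->
  (g *m X *m invmx g) *m (g *m Y *m invmx g) = g *m (X *m Y) *m invmx g.
Proof. by move=> u; rewrite !mulmxA mulmxKV. Qed.

Lemma cjtr (g X : 'M[R[i]]_2) : g \in unitmx -> \tr (g *m X *m invmx g) = \tr X.
Proof. by move=> u; rewrite mxtrace_mulC mulKmx. Qed.

Lemma eM (s t : R) : eitheta s *m eitheta t = eitheta (s + t).
Proof. rewrite !Qe Qmul cosD sinD; congr Q; ring. Qed.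

Lemma etr (t : R) : \tr (eitheta t) = (2 * cos t)%:C.
Proof. by rewrite Qe Qtr. Qed.

Lemma e0 : eitheta (0:R) = 1%:M.
Proof. by rewrite Qe cos0 sin0 Q1. Qed.

Lemma cRinj (x y : R) : x%:C = y%:C -> x = y.
Proof. by rewrite !cR => /cinj []. Qed.

Lemma angle (al be : R) : al^+2 + be^+2 = 1 -> exists t, cos t = al /\ sin t = be.
Proof.
move=> h.
have hal : -1 <= al <= 1.
  have : al^+2 <= 1 by rewrite -h lerDl sqr_ge0.
  by move=> h1; apply/andP; split; nra.
have ca : cos (acos al) = al by apply: acosK; rewrite in_itv /=.
have sa : sin (acos al) = `|be|.
  by rewrite sin_acos // -sqrtr_sqr; congr Num.sqrt; rewrite -h; ring.
have [hb|hb] := leP 0 be.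
  by exists (acos al); rewrite ca sa ger0_norm.
by exists (- acos al); rewrite cosN sinN ca sa ltr0_norm // opprK.
Qed.

Lemma endpt (s t : R) : is_endpoint (2 * cos s) (2 * cos t) ((2 * cos (s + t))%:C).
Proof.
rewrite /is_endpoint /Ilo /Ihi.
have -> : ((2 * cos s) ^+ 2 - 4) * ((2 * cos t) ^+ 2 - 4) = (4 * sin s * sin t)^+2.
  have hs := sin2cos2 s; have ht := sin2cos2 t.
  have -> : (4 * sin s * sin t)^+2 = 16 * sin s ^+2 * sin t ^+2 by ring.
  rewrite hs ht; ring.
rewrite sqrtr_sqr cosD.
have [h|h] := leP 0 (4 * sin s * sin t).
  by left; rewrite ger0_norm //; congr (_%:C); field.
by right; rewrite ltr0_norm //; congr (_%:C); field.
Qed.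

Lemma endpt_inv (a0 b0 p na nb : R) : a0^+2 + na = 1 -> b0^+2 + nb = 1 -> 0 <= na -> 0 <= nb ->
  is_endpoint (2*a0) (2*b0) ((2*(a0*b0 - p))%:C) -> p^+2 = na*nb.
Proof.
move=> ha hb hna hnb; rewrite /is_endpoint /Ilo /Ihi.
have E : ((2 * a0) ^+ 2 - 4) * ((2 * b0) ^+ 2 - 4) = 16 * na * nb.
  have -> : (2 * a0) ^+ 2 = 4 * (a0^+2 + na) - 4 * na by ring.
  have -> : (2 * b0) ^+ 2 = 4 * (b0^+2 + nb) - 4 * nb by ring.
  rewrite ha hb; ring.
rewrite E; set S := Num.sqrt _.
have hS : S^+2 = 16 * na * nb by rewrite sqr_sqrtr // !mulr_ge0.
case=> /cRinj h.
  have -> : p = S / 4 by lra.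
  by rewrite expr_div_n hS; field.
have -> : p = - S / 4 by lra.
by rewrite expr_div_n sqrrN hS; field.
Qed.

Lemma cross0 (a1 a2 a3 b1 b2 b3 : R) :
  (a1*b1 + a2*b2 + a3*b3)^+2 = (a1^+2+a2^+2+a3^+2) * (b1^+2+b2^+2+b3^+2) ->
  [/\ a2*b3 = a3*b2, a3*b1 = a1*b3 & a1*b2 = a2*b1].
Proof.
move=> h.
have L : (a2*b3 - a3*b2)^+2 + (a3*b1 - a1*b3)^+2 + (a1*b2 - a2*b1)^+2 = 0.
  have -> : (a2*b3 - a3*b2)^+2 + (a3*b1 - a1*b3)^+2 + (a1*b2 - a2*b1)^+2 =
    (a1^+2+a2^+2+a3^+2) * (b1^+2+b2^+2+b3^+2) - (a1*b1 + a2*b2 + a3*b3)^+2 by ring.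
  by rewrite h subrr.
have s1 := sqr_ge0 (a2*b3 - a3*b2).
have s2 := sqr_ge0 (a3*b1 - a1*b3).
have s3 := sqr_ge0 (a1*b2 - a2*b1).
have h1 : (a2*b3 - a3*b2)^+2 = 0 by lra.
have h2 : (a3*b1 - a1*b3)^+2 = 0 by lra.
have h3 : (a1*b2 - a2*b1)^+2 = 0 by lra.
move/eqP: h1; move/eqP: h2; move/eqP: h3.
by rewrite !sqrf_eq0 !subr_eq0 => /eqP-> /eqP-> /eqP->.
Qed.

Lemma par (a1 a2 a3 b1 b2 b3 : R) : 0 < a1^+2+a2^+2+a3^+2 ->
  [/\ a2*b3 = a3*b2, a3*b1 = a1*b3 & a1*b2 = a2*b1] ->
  let mu := (a1*b1 + a2*b2 + a3*b3) / (a1^+2+a2^+2+a3^+2) in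
  [/\ b1 = mu * a1, b2 = mu * a2 & b3 = mu * a3].
Proof.
move=> hn [k1 k2 k3] mu.
have hn0 : a1^+2+a2^+2+a3^+2 != 0 by rewrite gt_eqF.
split; rewrite /mu; apply: (mulfI hn0).
- have -> : (a1^+2+a2^+2+a3^+2) * b1 = a1 * (a1*b1 + a2*b2 + a3*b3) + a2*(a2*b1 - a1*b2) + a3*(a3*b1-a1*b3) by ring.
  rewrite -k3 k2 !subrr !mulr0 !addr0; by field; exact: hn0.
- have -> : (a1^+2+a2^+2+a3^+2) * b2 = a2 * (a1*b1 + a2*b2 + a3*b3) + a1*(a1*b2 - a2*b1) + a3*(a3*b2-a2*b3) by ring.
  rewrite k3 -k1 !subrr !mulr0 !addr0; by field; exact: hn0.
- have -> : (a1^+2+a2^+2+a3^+2) * b3 = a3 * (a1*b1 + a2*b2 + a3*b3) + a1*(a1*b3 - a3*b1) + a2*(a2*b3-a3*b2) by ring.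
  rewrite -k2 k1 !subrr !mulr0 !addr0; by field; exact: hn0.
Qed.

Lemma conj_main {w1 w2 w3 r : R} : 0 < r -> r^+2 = w1^+2+w2^+2+w3^+2 -> 0 <= w2 ->
  exists g : 'M[R[i]]_2, SU2 g /\ forall x0 mu, x0^+2 + mu^+2 * r^+2 = 1 ->
     Spin2 (g *m Q x0 (mu*w1) (mu*w2) (mu*w3) *m invmx g).
Proof.
move=> hr hrr hw.
have hpos : 0 < 2*r*(r+w2) by nra.
set n := Num.sqrt (2 * r * (r + w2)).
have hn : 0 < n by rewrite sqrtr_gt0.
have hn0 : n != 0 by rewrite gt_eqF.
have hn2 : n^+2 = 2*r*(r+w2) by rewrite sqr_sqrtr // ltW.
have hsum : (r+w2)^+2 + w3^+2 + w1^+2 = 2*r*(r+w2).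
  transitivity (r^+2 + 2*r*w2 + (w1^+2+w2^+2+w3^+2)); first ring.
  rewrite -hrr; ring.
set g := Q (n^-1 * (r+w2)) (n^-1 * (-w3)) (n^-1 * 0) (n^-1 * w1).
have sg : SU2 g.
  apply: QSU2.
  have -> : (n^-1 * (r+w2))^+2 + (n^-1 * (-w3))^+2 + (n^-1 * 0)^+2 + (n^-1 * w1)^+2
     = ((r+w2)^+2 + w3^+2 + w1^+2) / n^+2 by field.
  by rewrite hsum -hn2 divff // sqrf_eq0.
exists g; split => // x0 mu hx.
have [t [ct st]] : exists t, cos t = x0 /\ sin t = mu*r by apply: angle; rewrite exprMn.
exists t.
have u := @SU2_unit g sg.
suff H : g *m Q x0 (mu*w1) (mu*w2) (mu*w3) = eitheta t *m g.
  by rewrite H -mulmxA mulmxV // mulmx1.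
rewrite /g QZ Qe ct st -scalemxAl -scalemxAr; congr (_ *: _); rewrite !Qmul; congr Q.
- ring.
- ring.
- apply/eqP; rewrite -subr_eq0; apply/eqP.
  transitivity (mu * (w1^+2+w2^+2+w3^+2 - r^+2)); first ring.
  by rewrite -hrr subrr mulr0.
- ring.
Qed.

Lemma back_core (s a0 a1 a2 a3 b0 muB c0 muC : R) (rD : 'M[R[i]]_2) :
  let na := a1^+2 + a2^+2 + a3^+2 in
  s^+2 = 1 -> 0 <= s*a2 -> 0 < na -> a0^+2 + na = 1 -> b0^+2 + muB^+2 * na = 1 ->
  c0^+2 + muC^+2 * na = 1 ->
  Q a0 a1 a2 a3 *m Q b0 (muB*a1) (muB*a2) (muB*a3) *m Q c0 (muC*a1) (muC*a2) (muC*a3)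
    *m rD = 1%:M ->
  Spin2_rep (Q a0 a1 a2 a3) (Q b0 (muB*a1) (muB*a2) (muB*a3))
            (Q c0 (muC*a1) (muC*a2) (muC*a3)) rD.
Proof.
move=> na hs hsa hna hA hB hC hprod.
set r := Num.sqrt na.
have hr : 0 < r by rewrite sqrtr_gt0.
have hr2 : r^+2 = na by rewrite sqr_sqrtr // ltW.
have hrr : r^+2 = (s*a1)^+2 + (s*a2)^+2 + (s*a3)^+2.
  by rewrite !exprMn hs !mul1r hr2.
have [g [sg hg]] := conj_main hr hrr hsa.
have ss : forall m v : R, m * v = (s * m) * (s * v).
  by move=> m v; rewrite mulrCA !mulrA -expr2 hs mul1r.
have sA : Spin2 (g *m Q a0 a1 a2 a3 *m invmx g).
  have -> : Q a0 a1 a2 a3 = Q a0 (s*(s*a1)) (s*(s*a2)) (s*(s*a3)).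
    by rewrite !mulrA -expr2 hs !mul1r.
  by apply: hg; rewrite hs mul1r hr2.
have sB : Spin2 (g *m Q b0 (muB*a1) (muB*a2) (muB*a3) *m invmx g).
  rewrite (ss muB a1) (ss muB a2) (ss muB a3).
  by apply: hg; rewrite exprMn hs mul1r hr2.
have sC : Spin2 (g *m Q c0 (muC*a1) (muC*a2) (muC*a3) *m invmx g).
  rewrite (ss muC a1) (ss muC a2) (ss muC a3).
  by apply: hg; rewrite exprMn hs mul1r hr2.
have u := @SU2_unit g sg.
exists g; split => // X.
rewrite !inE => /orP [/eqP->//|/orP [/eqP->//|/orP [/eqP->//|]]].
move=> /eqP->.
move: sA sB sC => [ta ea] [tb eb] [tc ec].
have : g *m (Q a0 a1 a2 a3 *m Q b0 (muB*a1) (muB*a2) (muB*a3) *m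
   Q c0 (muC*a1) (muC*a2) (muC*a3) *m rD) *m invmx g = 1%:M.
  by rewrite hprod mulmx1 mulmxV.
rewrite -!cjM // ea eb ec !eM => hP.
exists (- (ta + tb + tc)).
transitivity (eitheta (- (ta + tb + tc)) *m (eitheta (ta + tb + tc) *m (g *m rD *m invmx g))).
  by rewrite mulmxA eM addNr e0 mul1mx.
by rewrite hP mulmx1.
Qed.
End S.

Theorem proposition3p1 (R : realType) (a b c d : R)
  (ha : -2 <= a <= 2) (hb : -2 <= b <= 2) (hc : -2 <= c <= 2) (hd : -2 <= d <= 2)
  (ha2 : a != 2) (ha2' : a != -2) (hb2 : b != 2) (hb2' : b != -2)
  (hc2 : c != 2) (hc2' : c != -2) (hd2 : d != 2) (hd2' : d != -2)
  (rA rB rC rD : 'M[R[i]]_2) (hrho : in_H a b c d rA rB rC rD) :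
  let x := \tr (rA *m rB) in
  let y := \tr (rB *m rC) in
  let z := \tr (rC *m rA) in
  Spin2_rep rA rB rC rD <->
  [/\ is_endpoint a b x /\ is_endpoint c d x,
      is_endpoint b c y /\ is_endpoint a d y &
      is_endpoint a c z /\ is_endpoint b d z].
Proof.
move=> x y z; subst x y z.
case: hrho => [[sA sB sC sD hprod] [tA tB tC tD]].
split.
  case=> g [sg hg].
  have u := SU2_unit sg.
  have [ta ea] : Spin2 (g *m rA *m invmx g) by apply: hg; rewrite !inE eqxx.
  have [tb eb] : Spin2 (g *m rB *m invmx g) by apply: hg; rewrite !inE eqxx !orbT.
  have [tc ec] : Spin2 (g *m rC *m invmx g) by apply: hg; rewrite !inE eqxx !orbT.
  have [td ed] : Spin2 (g *m rD *m invmx g) by apply: hg; rewrite !inE eqxx !orbT.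
  have ea' : a = 2 * cos ta by apply: cRinj; rewrite -tA -(cjtr _ u) ea etr.
  have eb' : b = 2 * cos tb by apply: cRinj; rewrite -tB -(cjtr _ u) eb etr.
  have ec' : c = 2 * cos tc by apply: cRinj; rewrite -tC -(cjtr _ u) ec etr.
  have ed' : d = 2 * cos td by apply: cRinj; rewrite -tD -(cjtr _ u) ed etr.
  have hx : \tr (rA *m rB) = (2 * cos (ta + tb))%:C.
    by rewrite -(cjtr _ u) -cjM // ea eb eM etr.
  have hy : \tr (rB *m rC) = (2 * cos (tb + tc))%:C.
    by rewrite -(cjtr _ u) -cjM // eb ec eM etr.
  have hz : \tr (rC *m rA) = (2 * cos (ta + tc))%:C.
    by rewrite -(cjtr _ u) -cjM // ec ea eM etr addrC.
  have hS : eitheta (ta + tb + tc + td) = 1%:M.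
    have : g *m (rA *m rB *m rC *m rD) *m invmx g = 1%:M.
      by rewrite hprod mulmx1 mulmxV.
    by rewrite -!cjM // ea eb ec ed !eM.
  move: hS; rewrite Qe -Q1 => /Qinj [cS _ sS _].
  have key : forall p, cos (ta + tb + tc + td - p) = cos p.
    by move=> p; rewrite cosB cS sS; ring.
  rewrite hx hy hz ea' eb' ec' ed'.
  split; split; try exact: endpt.
  - rewrite -(key (ta + tb)) (_ : ta + tb + tc + td - (ta + tb) = tc + td); last by ring.
    exact: endpt.
  - rewrite -(key (tb + tc)) (_ : ta + tb + tc + td - (tb + tc) = ta + td); last by ring.
    exact: endpt.
  - rewrite -(key (ta + tc)) (_ : ta + tb + tc + td - (ta + tc) = tb + td); last by ring.
    exact: endpt.
case=> [[hab _] [_ _] [hac _]].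
have [a0 [a1 [a2 [a3 [eA nA]]]]] := SU2_Q sA.
have [b0 [b1 [b2 [b3 [eB nB]]]]] := SU2_Q sB.
have [c0 [c1 [c2 [c3 [eC nC]]]]] := SU2_Q sC.
subst rA rB rC.
rewrite Qtr in tA; have ea := cRinj tA; subst a.
rewrite Qtr in tB; have eb := cRinj tB; subst b.
rewrite Qtr in tC; have ec := cRinj tC; subst c.
rewrite Qmul Qtr in hab; rewrite Qmul Qtr in hac.
set na := a1^+2 + a2^+2 + a3^+2.
set nb := b1^+2 + b2^+2 + b3^+2.
set nc := c1^+2 + c2^+2 + c3^+2.
have nA' : a0^+2 + na = 1 by rewrite -nA /na; ring.
have nB' : b0^+2 + nb = 1 by rewrite -nB /nb; ring.
have nC' : c0^+2 + nc = 1 by rewrite -nC /nc; ring.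
have hna0 : 0 <= na by rewrite /na; nra.
have hnb0 : 0 <= nb by rewrite /nb; nra.
have hnc0 : 0 <= nc by rewrite /nc; nra.
have pab : (a1*b1 + a2*b2 + a3*b3)^+2 = na * nb.
  apply: (endpt_inv nA' nB' hna0 hnb0).
  by move: hab; congr (is_endpoint _ _ (_%:C)); ring.
have pac : (a1*c1 + a2*c2 + a3*c3)^+2 = na * nc.
  apply: (endpt_inv nA' nC' hna0 hnc0).
  by move: hac; congr (is_endpoint _ _ (_%:C)); ring.
have h1 : 2*a0 < 2 by rewrite lt_neqAle ha2; case/andP: ha.
have h2 : -2 < 2*a0 by rewrite lt_neqAle eq_sym ha2'; case/andP: ha.
have hna : 0 < na by nra.
move: (par hna (cross0 pab)) => /= [e1 e2 e3].
move: (par hna (cross0 pac)) => /= [f1 f2 f3].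
set muB := _ / _ in e1 e2 e3.
set muC := _ / _ in f1 f2 f3.
have nB2 : b0^+2 + muB^+2 * na = 1 by rewrite -nB e1 e2 e3 /na; ring.
have nC2 : c0^+2 + muC^+2 * na = 1 by rewrite -nC f1 f2 f3 /na; ring.
rewrite e1 e2 e3 f1 f2 f3 in hprod *.
have [h0|h0] := leP 0 a2.
  apply: (back_core (s := 1)) => //; rewrite ?expr1n ?mul1r //.
apply: (back_core (s := -1)) => //; rewrite ?sqrrN ?expr1n ?mulN1r //; lra.
Qed.
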